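(* Let $p$ be a prime and $d\ge0$ an integer. If $S_1,S_2\subseteq{\mathbb N}$ are both $p$-normal of order $\le d$, then $S_1\cap S_2$ is $p$-normal of order $\le d$.
   Context: ${\mathbb N}=\{0,1,2,\dots\}$. An infinite arithmetic progression is $m+n{\mathbb N}$ with $m\in{\mathbb N}$, $n\ge1$. Let $q$ be a power of $p$. For $r\ge1$ and $c_0,\dots,c_r\in{\mathbb Q}$ with $(q-1)c_i\in{\mathbb Z}$, $c_0+\cdots+c_r\in{\mathbb Z}$, $c_i\ne0$ for $1\le i\le r$ and $c_i>0$ for some $1\le i\le r$, the set $S_q(c_0;c_1,\dots,c_r)=\{c_0+\sum_{i=1}^rc_iq^{k_i}\mid k_i\in{\mathbb N}\}\cap{\mathbb N}$ is an elementary $p$-nested set of order $r$. A $p$-nested set of order $\le k$ is the union of a finite set and finitely many elementary $p$-nested sets (possibly for different powers $q$ of $p$) of orders $\le k$. A set $S\subseteq{\mathbb N}$ is $p$-normal of order $\le k$ if there are a $p$-nested set $B$ of order $\le k$ and finitely many infinite arithmetic progressions $A_1,\dots,A_s$ such that $S$ and $B\cup A_1\cup\cdots\cup A_s$ have finite symmetric difference. *)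

(* Defs.v *)
From mathcomp Require Import all_boot all_order all_algebra.
Set Implicit Arguments. Unset Strict Implicit. Unset Printing Implicit Defensive.
Import Order.TTheory GRing.Theory Num.Theory.
Local Open Scope ring_scope.

Definition is_int (x : rat) : Prop := exists z : int, x = z%:~R.

(* The set S_q(c0; c_1,...,c_r) with cs = [:: c_1; ...; c_r]:
   { c0 + sum_i c_i q^(k_i) | k_i in N } intersected with N. *)
Definition elem_set (q : nat) (c0 : rat) (cs : seq rat) : nat -> Prop :=
  fun n => exists ks : seq nat, size ks = size cs /\
    (n%:R : rat) = c0 + \sum_(i < size cs) cs`_i * (q%:R) ^+ (nth 0%N ks i).

(* Side conditions making S_q(c0; cs) an elementary p-nested set of order r = size cs. *)
Definition elem_valid (q : nat) (c0 : rat) (cs : seq rat) : Prop :=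
  (1 <= size cs)%N /\
  is_int ((q%:R - 1) * c0) /\
  (forall i : 'I_(size cs), is_int ((q%:R - 1) * cs`_i)) /\
  is_int (c0 + \sum_(i < size cs) cs`_i) /\
  (forall i : 'I_(size cs), cs`_i != 0) /\
  (exists i : 'I_(size cs), 0 < cs`_i).

Definition p_nested (p k : nat) (B : nat -> Prop) : Prop :=
  exists (F : seq nat) (L : seq (nat * rat * seq rat)),
    (forall t, t \in L ->
       (0 < t.1.1)%N /\ elem_valid (p ^ t.1.1) t.1.2 t.2 /\ (size t.2 <= k)%N) /\
    (forall n, B n <-> (n \in F \/ exists2 t, t \in L & elem_set (p ^ t.1.1) t.1.2 t.2 n)).

Definition arith_prog (m n : nat) : nat -> Prop := fun x => exists j : nat, x = (m + n * j)%N.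

Definition fin_symdiff (S T : nat -> Prop) : Prop :=
  exists s : seq nat, forall x, ~ (S x <-> T x) -> x \in s.

Definition p_normal (p k : nat) (S : nat -> Prop) : Prop :=
  exists (B : nat -> Prop) (A : seq (nat * nat)),
    p_nested p k B /\ (forall a, a \in A -> (1 <= a.2)%N) /\
    fin_symdiff S (fun x => B x \/ exists2 a, a \in A & arith_prog a.1 a.2 x).

(* Main.v *)
Require Import Defs.
From mathcomp Require Import all_boot all_order all_algebra zify ring.
From Stdlib Require Import Classical.
Set Implicit Arguments. Unset Strict Implicit. Unset Printing Implicit Defensive.
Import Order.TTheory GRing.Theory Num.Theory.

Module M0.

Lemma pn_ext p k (B B' : nat -> Prop) :
  (forall n, B n <-> B' n) -> p_nested p k B -> p_nested p k B'.
Proof.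
move=> h [F [L [hL hB]]]; exists F, L; split=> // n; rewrite -h; exact: hB.
Qed.

Lemma pn_union p k (B1 B2 : nat -> Prop) :
  p_nested p k B1 -> p_nested p k B2 -> p_nested p k (fun n => B1 n \/ B2 n).
Proof.
move=> [F1 [L1 [hL1 hB1]]] [F2 [L2 [hL2 hB2]]].
exists (F1 ++ F2), (L1 ++ L2); split.
  by move=> t; rewrite mem_cat => /orP [] ?; [apply: hL1 | apply: hL2].
move=> n; rewrite hB1 hB2 mem_cat; split.
  case=> [[h|[t ht hE]]|[h|[t ht hE]]].
  - by left; rewrite h.
  - by right; exists t => //; rewrite mem_cat ht.
  - by left; rewrite h orbT.
  - by right; exists t => //; rewrite mem_cat ht orbT.
case=> [/orP [] h|[t]]; first (by left; left); first (by right; left).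
rewrite mem_cat => /orP [] ht hE; [left | right]; right; exists t => //.
Qed.

Lemma bounded_seq (B : nat -> Prop) M :
  exists F : seq nat, forall n, (B n /\ (n < M)%N) <-> n \in F.
Proof.
elim: M => [|M [F hF]]; first by exists [::] => n; split => // [[_]].
case: (classic (B M)) => hM.
- exists (M :: F) => n; rewrite in_cons ltnS leq_eqVlt; split.
    case=> hn /orP [/eqP ->|h]; first by rewrite eqxx.
    by apply/orP; right; apply/hF.
  case/orP => [/eqP ->|/hF [hn h]]; first by rewrite eqxx.
  by rewrite h orbT.
- exists F => n; rewrite ltnS leq_eqVlt; split.
    case=> hn /orP [/eqP e|h]; first by rewrite e in hn.
    by apply/hF.
  by move/hF => [hn h]; rewrite h orbT.
Qed.

Lemma pn_bounded p k (B : nat -> Prop) M :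
  (forall n, B n -> (n <= M)%N) -> p_nested p k B.
Proof.
move=> hb; have [F hF] := bounded_seq B M.+1.
exists F, [::]; split => // n; rewrite -hF; split.
  by move=> h; left; split => //; rewrite ltnS hb.
by case=> [[]|[t]] //.
Qed.

Lemma pn_seq_union (T : eqType) p k (s : seq T) (B : T -> nat -> Prop) :
  (forall t, t \in s -> p_nested p k (B t)) ->
  p_nested p k (fun n => exists2 t, t \in s & B t n).
Proof.
elim: s => [|a s IH] h.
  by apply: (@pn_bounded _ _ _ 0) => n [t].
have ha : p_nested p k (B a) by apply: h; rewrite mem_head.
have hs : p_nested p k (fun n => exists2 t, t \in s & B t n).
  by apply: IH => t ht; apply: h; rewrite in_cons ht orbT.
apply: (pn_ext _ (pn_union ha hs)) => n; split.
  case=> [hn|[t ht hn]]; first by exists a; rewrite ?mem_head.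
  by exists t; rewrite // in_cons ht orbT.
by case=> t; rewrite in_cons => /orP [/eqP ->|ht] hn; [left|right; exists t].
Qed.

Lemma pn_fin_union (I : finType) p k (P : I -> Prop) (B : I -> nat -> Prop) :
  (forall i, P i -> p_nested p k (B i)) ->
  p_nested p k (fun n => exists i, P i /\ B i n).
Proof.
move=> h.
have h' : forall i, i \in enum I -> p_nested p k (fun n => P i /\ B i n).
  move=> i _; case: (classic (P i)) => hP.
    by apply: (pn_ext _ (h i hP)) => n; split => // [[]].
  by apply: (@pn_bounded _ _ _ 0) => n [].
apply: (pn_ext _ (pn_seq_union h')) => n; split.
  by case=> i _ [hP hB]; exists i.
by case=> i [hP hB]; exists i; rewrite ?mem_enum.
Qed.

Lemma pn_mono p k k' (B : nat -> Prop) :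
  (k <= k')%N -> p_nested p k B -> p_nested p k' B.
Proof.
move=> hk [F [L [hL hB]]]; exists F, L; split => // t ht.
have [h1 [h2 h3]] := hL t ht; split => //; split => //; exact: leq_trans hk.
Qed.

Definition ev_eq (S T : nat -> Prop) := exists M, forall n, (M <= n)%N -> (S n <-> T n).

Lemma fin_symdiff_ev S T : fin_symdiff S T <-> ev_eq S T.
Proof.
split.
  move=> [s hs]; exists (\max_(x <- s) x).+1 => n hn.
  case: (classic (S n <-> T n)) => // /hs hin.
  have : (n <= \max_(x <- s) x)%N by apply: leq_bigmax_seq.
  by rewrite leqNgt hn.
move=> [M hM]; exists (iota 0 M) => n hn; rewrite mem_iota add0n /=.
by rewrite ltnNge; apply/negP => /hM.
Qed.

End M0.
Import M0.

Module M1.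
Local Open Scope ring_scope.

Definition fam (q : nat) (c0 : rat) n (a : 'I_n -> rat) (N : nat) : Prop :=
  exists e : 'I_n -> nat, (N%:R : rat) = c0 + \sum_(i < n) a i * q%:R ^+ e i.

Fixpoint famS (q : nat) (c0 : rat) (cs : seq rat) (x : rat) : Prop :=
  match cs with
  | [::] => x = c0
  | c :: cs' => exists k : nat, famS q (c0 + c * q%:R ^+ k) cs' x
  end.

Lemma elem_famS q c0 cs N : elem_set q c0 cs N <-> famS q c0 cs N%:R.
Proof.
elim: cs c0 => [|c cs IH] c0 /=.
  split; first by case=> ks [_ h]; rewrite big_ord0 addr0 in h.
  by move=> h; exists [::]; rewrite big_ord0 addr0.
split.
  case=> ks [hs h]; case: ks hs h => [//|k ks] /= [hs] h; exists k; apply/IH; exists ks; split => //.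
  by rewrite h big_ord_recl /= addrA.
case=> k /IH [ks [hs h]]; exists (k :: ks); split; first by rewrite /= hs.
by rewrite h big_ord_recl /= addrA.
Qed.

Lemma fam_famS q c0 n (a : 'I_n -> rat) N :
  fam q c0 a N <-> famS q c0 [seq a i | i <- enum 'I_n] N%:R.
Proof.
elim: n c0 a => [|n IH] c0 a.
  rewrite enum_ord0 /=; split; first by case=> e h; rewrite big_ord0 addr0 in h.
  by move=> h; exists (fun _ => 0%N); rewrite h big_ord0 addr0.
rewrite enum_ordSl /= -map_comp; split.
  case=> e h; exists (e ord0); apply: (proj1 (IH _ (fun i => a (lift ord0 i)))); exists (fun i => e (lift ord0 i)).
  by rewrite h big_ord_recl addrA.
case=> k hk; have [e' he'] := proj2 (IH _ (fun i => a (lift ord0 i))) hk; exists (fun i => if unlift ord0 i is Some j then e' j else k).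
rewrite big_ord_recl unlift_none addrA he'; congr (_ + _).
by apply: eq_bigr => i _; rewrite liftK.
Qed.

Lemma famS_filter q c0 cs x :
  famS q c0 cs x <-> famS q c0 [seq c <- cs | c != 0] x.
Proof.
elim: cs c0 => [|c cs IH] c0 //=.
case: eqP => [->|_] /=.
  split; first by case=> k; rewrite mul0r addr0 => /IH.
  by move=> /IH h; exists 0%N; rewrite mul0r addr0.
by split; case=> k hk; exists k; apply/IH.
Qed.

Lemma famS_le q c0 cs x :
  all (fun c => c <= 0) cs -> famS q c0 cs x -> x <= c0.
Proof.
elim: cs c0 => [|c cs IH] c0 /=; first by move=> _ ->.
case/andP=> hc hcs [k /(IH _ hcs) h]; apply: (le_trans h).
by rewrite gerDl mulr_le0_ge0 // exprn_ge0 // ler0n.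
Qed.

Lemma pn_bounded_rat p k (B : nat -> Prop) (c : rat) :
  (forall n, B n -> (n%:R : rat) <= c) -> p_nested p k B.
Proof.
move=> hb; apply: (@pn_bounded _ _ _ (Num.Def.archi_bound `|c|)) => n /hb hn.
have h := archi_boundP (normr_ge0 c).
have : (n%:R : rat) < (Num.Def.archi_bound `|c|)%:R.
  by apply: le_lt_trans h; apply: (le_trans hn); exact: ler_norm.
by rewrite ltr_nat => /ltnW.
Qed.

Lemma is_int_numq x : is_int x -> x = (numq x)%:~R.
Proof. by case=> z ->; rewrite numq_int. Qed.

Lemma is_intD x y : is_int x -> is_int y -> is_int (x + y).
Proof. by case=> a -> [b ->]; exists (a + b); rewrite rmorphD. Qed.
Lemma is_intM x y : is_int x -> is_int y -> is_int (x * y).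
Proof. by case=> a -> [b ->]; exists (a * b); rewrite rmorphM. Qed.
Lemma is_intN x : is_int x -> is_int (- x).
Proof. by case=> a ->; exists (- a); rewrite rmorphN. Qed.
Lemma is_int_nat (m : nat) : is_int m%:R.
Proof. by exists m%:Z. Qed.
Lemma is_int0 : is_int 0.
Proof. by exists 0. Qed.
Lemma is_int_sum I (r : seq I) (P : pred I) (F : I -> rat) :
  (forall i, P i -> is_int (F i)) -> is_int (\sum_(i <- r | P i) F i).
Proof.
move=> h; apply: (big_ind (fun x => is_int x)) => //; first exact: is_int0.
exact: is_intD.
Qed.

Lemma sum_nth_seq (cs : seq rat) : \sum_(i < size cs) cs`_i = \sum_(c <- cs) c.
Proof. by rewrite (big_nth 0) big_mkord. Qed.

Lemma card_nz n (a : 'I_n -> rat) :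
  #|[set i | a i != 0]| = size [seq c <- [seq a i | i <- enum 'I_n] | c != 0].
Proof.
rewrite cardsE cardE size_filter count_map /enum_mem size_filter -enumT.
by rewrite (@eq_filter _ _ predT) // filter_predT; apply: eq_count.
Qed.

Lemma pn_fam p E k c0 n (a : 'I_n -> rat) :
  (0 < E)%N ->
  is_int (((p ^ E)%:R - 1) * c0) ->
  (forall i, is_int (((p ^ E)%:R - 1) * a i)) ->
  is_int (c0 + \sum_(i < n) a i) ->
  (#|[set i | a i != 0%R]| <= k)%N ->
  p_nested p k (fam (p ^ E) c0 a).
Proof.
move=> hE h0 ha hs hk.
set cs := [seq c <- [seq a i | i <- enum 'I_n] | c != 0].
have eqv : forall N, fam (p ^ E) c0 a N <-> famS (p ^ E) c0 cs N%:R.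
  by move=> N; rewrite fam_famS famS_filter.
have memcs : forall c, c \in cs -> c != 0 /\ exists i, c = a i.
  move=> c; rewrite mem_filter => /andP [hc /mapP [i _ hi]]; split => //.
  by exists i.
case hpos: (has (fun c => 0 < c) cs).
  have hv : elem_valid (p ^ E) c0 cs.
    split; first by case: (cs) hpos.
    split => //; split.
      by move=> i; have [_ [j ->]] := memcs _ (mem_nth 0 (ltn_ord i)).
    split.
      rewrite sum_nth_seq big_filter.
      have -> : \sum_(c <- [seq a i | i <- enum 'I_n] | c != 0) c
             = \sum_(c <- [seq a i | i <- enum 'I_n]) c.
        rewrite [RHS](bigID (fun c => c != 0)) /=.
        by rewrite [X in _ = _ + X]big1 ?addr0 // => c /negPn /eqP.
      by rewrite big_map big_enum.
    split; first by move=> i; have [] := memcs _ (mem_nth 0 (ltn_ord i)).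
    move/(has_nthP 0): hpos => [i hi hpos]; by exists (Ordinal hi).
  exists [::], [:: (E, c0, cs)]; split.
    move=> t; rewrite inE => /eqP -> /=; split => //; split => //.
    by rewrite -card_nz.
  move=> N; rewrite eqv; split.
    by move=> h; right; exists (E, c0, cs); rewrite ?inE //= elem_famS.
  by case=> [//|[t]]; rewrite inE => /eqP -> /=; rewrite elem_famS.
apply: (@pn_bounded_rat _ _ _ c0) => N /eqv; apply: famS_le.
apply/allP => c hc; rewrite leNgt; apply/negP => hc'.
by move/negbT/hasPn: hpos => /(_ c hc); rewrite hc'.
Qed.

End M1.
Import M1.

Module M2.
Local Open Scope ring_scope.

Definition kv n (m : nat) (fx : 'I_n -> bool) (f : 'I_n -> nat) (rep : 'I_n -> 'I_n)
  (off : 'I_n -> nat) (t : 'I_n -> nat) (i : 'I_n) : nat :=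
  if fx i then f i else (off i + m * t (rep i))%N.

Lemma pat_sum (R : comNzRingType) n m fx f rep off (t : 'I_n -> nat) (w : 'I_n -> R) (x : R) :
  \sum_i w i * x ^+ kv m fx f rep off t i =
  \sum_(i | fx i) w i * x ^+ f i +
  \sum_C (\sum_(i | ~~ fx i && (rep i == C)) w i * x ^+ off i) * (x ^+ m) ^+ t C.
Proof.
rewrite (bigID fx) /=; congr (_ + _).
  by apply: eq_bigr => i hi; rewrite /kv hi.
rewrite (partition_big rep predT) //=; apply: eq_bigr => C _.
rewrite mulr_suml; apply: eq_bigr => i /andP [hi /eqP hr].
by rewrite /kv (negbTE hi) hr exprD exprM mulrA.
Qed.

Definition pfam q m c0 n (a : 'I_n -> rat) fx f rep off (N : nat) : Prop :=
  exists t : 'I_n -> nat, (N%:R : rat) = c0 + \sum_i a i * q%:R ^+ kv m fx f rep off t i.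

Definition pc0 q c0 n (a : 'I_n -> rat) (fx : 'I_n -> bool) f : rat :=
  c0 + \sum_(i | fx i) a i * q%:R ^+ f i.
Definition pbeta q n (a : 'I_n -> rat) (fx : 'I_n -> bool) (rep : 'I_n -> 'I_n) off C : rat :=
  \sum_(i | ~~ fx i && (rep i == C)) a i * q%:R ^+ off i.

Lemma pfam_fam_eq q m c0 n (a : 'I_n -> rat) fx f rep off N :
  pfam q m c0 a fx f rep off N <-> fam (q ^ m) (pc0 q c0 a fx f) (pbeta q a fx rep off) N.
Proof.
rewrite /pfam /fam /pc0 /pbeta natrX.
by split; case=> t h; exists t; rewrite h pat_sum addrA.
Qed.

Lemma pfam_sub q m c0 n (a : 'I_n -> rat) fx f rep off N :
  pfam q m c0 a fx f rep off N -> fam q c0 a N.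
Proof. by case=> t h; exists (kv m fx f rep off t). Qed.

Section IntLemmas.
Variable q : nat.
Let Q : rat := q%:R.

Lemma iq_mulX y j : is_int ((Q - 1) * y) -> is_int ((Q - 1) * (y * Q ^+ j)).
Proof. by move=> h; rewrite mulrA; apply: is_intM => //; rewrite /Q -natrX; exact: is_int_nat. Qed.

Lemma iq_pow y m : is_int ((Q - 1) * y) -> is_int ((Q ^+ m - 1) * y).
Proof.
move=> h; rewrite subrX1 mulrAC; apply: is_intM => //.
by apply: is_int_sum => i _; rewrite /Q -natrX; exact: is_int_nat.
Qed.

Lemma iq_sub y j : is_int ((Q - 1) * y) -> is_int (y * Q ^+ j - y).
Proof.
move=> h; rewrite -{2}(mulr1 y) -mulrBr subrX1 mulrA [y * _]mulrC.
apply: is_intM => //; apply: is_int_sum => i _; rewrite /Q -natrX; exact: is_int_nat.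
Qed.
End IntLemmas.

Lemma pfam_intg p E k m c0 n (a : 'I_n -> rat) fx f rep off :
  is_int (((p ^ E)%:R - 1) * c0) ->
  (forall i, is_int (((p ^ E)%:R - 1) * a i)) ->
  is_int (c0 + \sum_(i < n) a i) ->
  (#|[set i | a i != 0%R]| <= k)%N ->
  [/\ is_int (((p ^ (E * m))%:R - 1) * pc0 (p ^ E) c0 a fx f),
      (forall C, is_int (((p ^ (E * m))%:R - 1) * pbeta (p ^ E) a fx rep off C)),
      is_int (pc0 (p ^ E) c0 a fx f + \sum_C pbeta (p ^ E) a fx rep off C) &
      (#|[set C | pbeta (p ^ E) a fx rep off C != 0%R]| <= k)%N].
Proof.
move=> h0 ha hs hk; split.
- rewrite expnM natrX /pc0 mulrDr; apply: is_intD; first exact: iq_pow.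
  rewrite mulr_sumr; apply: is_int_sum => i _; apply: iq_pow; exact: iq_mulX.
- move=> C; rewrite expnM natrX /pbeta mulr_sumr; apply: is_int_sum => i _.
  apply: iq_pow; exact: iq_mulX.
- have := pat_sum m fx f rep off (fun _ => 0%N) a (p ^ E)%:R.
  rewrite /pc0 /pbeta.
  under [X in _ = _ + X]eq_bigr do rewrite expr0 mulr1.
  rewrite -addrA => <-.
  have -> : \sum_i a i * (p ^ E)%:R ^+ kv m fx f rep off (fun=> 0%N) i =
            \sum_i a i + \sum_i (a i * (p ^ E)%:R ^+ kv m fx f rep off (fun=> 0%N) i - a i).
    by rewrite -big_split /=; apply: eq_bigr => i _; rewrite addrC subrK.
  rewrite addrA; apply: is_intD => //; apply: is_int_sum => i _; exact: iq_sub.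
- apply: leq_trans hk; apply: (leq_trans _ (leq_imset_card rep _)).
  apply: subset_leq_card; apply/subsetP => C; rewrite inE => hC.
  case: (boolP [exists i, [&& ~~ fx i, rep i == C & a i != 0]]).
    by case/existsP => i /and3P [_ /eqP <- hi]; apply: imset_f; rewrite inE.
  move/existsPn => hn; move: hC; rewrite /pbeta big1 ?eqxx // => i /andP [h1 h2].
  by have := hn i; rewrite h1 h2 /= => /negbNE /eqP ->; rewrite mul0r.
Qed.

Lemma pn_pfam p E k m c0 n (a : 'I_n -> rat) fx f rep off :
  (0 < E)%N -> (0 < m)%N ->
  is_int (((p ^ E)%:R - 1) * c0) ->
  (forall i, is_int (((p ^ E)%:R - 1) * a i)) ->
  is_int (c0 + \sum_(i < n) a i) ->
  (#|[set i | a i != 0%R]| <= k)%N ->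
  p_nested p k (pfam (p ^ E) m c0 a fx f rep off).
Proof.
move=> hE hm h0 ha hs hk.
have [i1 i2 i3 i4] := @pfam_intg p E k m c0 n a fx f rep off h0 ha hs hk.
apply: (pn_ext (fun N => iff_sym (@pfam_fam_eq (p ^ E) m c0 n a fx f rep off N))).
rewrite -expnM; apply: pn_fam => //; by rewrite muln_gt0 hE.
Qed.

Lemma pfam_ext q m c0 n (a : 'I_n -> rat) fx f rep off fx' f' rep' off' :
  (forall i, fx i = fx' i /\ f i = f' i /\ rep i = rep' i /\ off i = off' i) ->
  forall N, pfam q m c0 a fx f rep off N <-> pfam q m c0 a fx' f' rep' off' N.
Proof.
move=> h N.
have e : forall t i, kv m fx f rep off t i = kv m fx' f' rep' off' t i.
  by move=> t i; rewrite /kv; have [-> [-> [-> ->]]] := h i.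
by split; case=> t ht; exists t; rewrite ht; apply: congr1; apply: eq_bigr => i _; rewrite e.
Qed.

Lemma pn_cover p E k m (B : nat) c0 n (a : 'I_n -> rat) (T : nat -> Prop) :
  (0 < E)%N -> (0 < m)%N ->
  is_int (((p ^ E)%:R - 1) * c0) ->
  (forall i, is_int (((p ^ E)%:R - 1) * a i)) ->
  is_int (c0 + \sum_(i < n) a i) ->
  (#|[set i | a i != 0%R]| <= k)%N ->
  (forall N, fam (p ^ E) c0 a N -> T N ->
     exists fx f rep off, (forall i, f i <= B /\ off i <= B)%N /\
       pfam (p ^ E) m c0 a fx f rep off N /\
       (forall N', pfam (p ^ E) m c0 a fx f rep off N' -> T N')) ->
  p_nested p k (fun N => fam (p ^ E) c0 a N /\ T N).
Proof.
move=> hE hm h0 ha hs hk hcov.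
pose I := {ffun 'I_n -> bool * 'I_B.+1 * 'I_n * 'I_B.+1}.
pose gfx (g : I) i := (g i).1.1.1.
pose gf (g : I) i := nat_of_ord (g i).1.1.2.
pose grep (g : I) i := (g i).1.2.
pose goff (g : I) i := nat_of_ord (g i).2.
pose P (g : I) := forall N', pfam (p ^ E) m c0 a (gfx g) (gf g) (grep g) (goff g) N' -> T N'.
have := @pn_fin_union I p k P (fun g => pfam (p ^ E) m c0 a (gfx g) (gf g) (grep g) (goff g)).
move/(_ (fun g _ => @pn_pfam p E k m c0 n a (gfx g) (gf g) (grep g) (goff g) hE hm h0 ha hs hk)).
apply: pn_ext => N; split.
  by case=> g [hP hN]; split; [exact: pfam_sub hN | exact: hP].
case=> hN hT; have [fx [f [rep [off [hb [hpf hsub]]]]]] := hcov N hN hT.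
pose g : I := [ffun i => (fx i, inord (f i), rep i, inord (off i))].
have hg : forall i, gfx g i = fx i /\ gf g i = f i /\ grep g i = rep i /\ goff g i = off i.
  move=> i; rewrite /gfx /gf /grep /goff !ffunE /= !inordK ?ltnS; last 2 first.
  - by case: (hb i).
  - by case: (hb i).
  by [].
exists g; split.
  by move=> N' /(pfam_ext _ _ _ _ hg) /hsub.
by apply/(pfam_ext _ _ _ _ hg).
Qed.

End M2.
Import M2.

Module M3.
Local Open Scope ring_scope.

Section Cover.
Variable q : nat.
Hypothesis hq : (1 < q)%N.
Variable n : nat.
Variable al : 'I_n -> int.

Let pw (k : nat) : int := (q%:Z) ^+ k.
Let A : int := \sum_i `|al i|.

Lemma pw_gt0 k : 0 < pw k.
Proof. by rewrite /pw exprn_gt0 // ltz_nat ltnW. Qed.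

Lemma pw_le a b : (a <= b)%N -> pw a <= pw b.
Proof. by move=> h; rewrite /pw ler_eXn2l // ltz_nat. Qed.

Lemma pw_nat k : pw k = (q ^ k)%N%:Z.
Proof. by rewrite /pw -[RHS]natz natrX natz. Qed.

Lemma pw_gtk k : (k%:Z) < pw k.
Proof. by rewrite pw_nat ltz_nat ltn_expl. Qed.

Lemma pwD a b : pw (a + b) = pw a * pw b.
Proof. by rewrite /pw exprD. Qed.

Lemma A_ge0 : 0 <= A.
Proof. by apply: sumr_ge0 => i _; exact: normr_ge0. Qed.

Lemma sub_sum_le (U : {set 'I_n}) : \sum_(i in U) `|al i| <= A.
Proof.
rewrite /A [X in _ <= X](bigID (fun i => i \in U)) /= lerDl.
by apply: sumr_ge0 => i _; exact: normr_ge0.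
Qed.

Variable G : nat.
Hypothesis hG0 : (0 < G)%N.

Lemma split_lemma (U : {set 'I_n}) (e : 'I_n -> nat) (g : int) (i1 : 'I_n) :
  i1 \in U -> \sum_(i in U) al i * pw (e i) = g -> `|g| + A < pw G ->
  exists Lo : {set 'I_n}, exists i0 m0,
    [/\ i0 \in Lo, Lo \subset U,
        (forall i, i \in Lo -> m0 <= e i <= m0 + #|U| * G)%N,
        \sum_(i in Lo) al i * pw (e i) = g &
        \sum_(i in U :\: Lo) al i * pw (e i) = 0].
Proof.
move=> hi1 hsum hbound.
case: (arg_minnP e hi1) => i0 hi0U hmin; set m0 := e i0.
have {}hi0U : i0 \in U by [].
set s := [seq ((e j - m0.+1) %/ G)%N | j <- enum (U :\ i0)].
have hsz : size s = #|U|.-1 by rewrite size_map -cardE (cardsD1 i0 U) hi0U.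
have [k0 hk0 hk0s] : exists2 k0, (k0 < #|U|)%N & k0 \notin s.
  case hall: (all (fun k => k \in s) (iota 0 #|U|)).
    have := uniq_leq_size (iota_uniq 0 #|U|) (fun k hk => allP hall k hk).
    rewrite size_iota hsz; have : (0 < #|U|)%N by apply/card_gt0P; exists i0.
    by case: #|U| => // u _; rewrite ltnn.
  move/negbT: hall => /allPn [k0 hk0 hk0s]; exists k0 => //.
  by move: hk0; rewrite mem_iota.
set h := (m0.+1 + k0 * G)%N.
have hgap : forall j, j \in U -> ~~ (h <= e j < h + G)%N.
  move=> j hj; apply/negP => /andP [hj1 hj2].
  case: (eqVneq j i0) => [ej|nej].
    by move: hj1; rewrite ej /h -/m0; lia.
  have : ((e j - m0.+1) %/ G)%N = k0.
    apply/eqP; rewrite eqn_leq; apply/andP; split.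
      by rewrite -ltnS ltn_divLR //; move: hj2; rewrite /h; lia.
    by rewrite leq_divRL //; move: hj1; rewrite /h; lia.
  move=> hk; move: hk0s; rewrite -hk; apply/negP/negPn.
  by apply: map_f; rewrite mem_enum !inE nej hj.
set Lo := [set j in U | (e j < h)%N].
have hLoU : Lo \subset U by apply/subsetP => j; rewrite inE => /andP [].
exists Lo, i0, m0.
have hi0Lo : i0 \in Lo by rewrite inE hi0U /h -/m0; lia.
have hsplit : \sum_(i in U) al i * pw (e i) =
   \sum_(i in Lo) al i * pw (e i) + \sum_(i in U :\: Lo) al i * pw (e i).
  by rewrite (big_setID Lo) /= (setIidPr hLoU).
have hHi : forall j, j \in U :\: Lo -> (h + G <= e j)%N.
  move=> j; rewrite !inE => /andP [hn hj]; rewrite hj /= -leqNgt in hn.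
  by have := hgap j hj; rewrite hn /= -leqNgt.
set T := \sum_(i in U :\: Lo) al i * pw (e i - (h + G)).
have hT : \sum_(i in U :\: Lo) al i * pw (e i) = pw (h + G) * T.
  rewrite /T mulr_sumr; apply: eq_bigr => j hj.
  by rewrite mulrCA -pwD subnKC // hHi.
have hLo : `|\sum_(i in Lo) al i * pw (e i)| <= A * pw h.-1.
  apply: (le_trans (ler_norm_sum _ _ _)).
  apply: (@le_trans _ _ (\sum_(i in Lo) `|al i| * pw h.-1)).
    apply: ler_sum => j hj; rewrite normrM [`|pw _|]ger0_norm; last exact: ltW (pw_gt0 _).
    apply: ler_wpM2l; first exact: normr_ge0.
    by apply: pw_le; move: hj; rewrite inE => /andP [_]; rewrite /h; lia.
  rewrite -mulr_suml ler_wpM2r ?sub_sum_le //; exact: ltW (pw_gt0 _).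
have hT0 : T = 0.
  apply/eqP; apply/negPn/negP => hTn.
  have h1 : pw (h + G) <= `|pw (h + G) * T|.
    rewrite normrM [`|pw _|]ger0_norm; last exact: ltW (pw_gt0 _).
    rewrite -{1}[pw (h + G)]mulr1 ler_wpM2l //; first exact: ltW (pw_gt0 _).
    by move: hTn; lia.
  have h2 : pw (h + G) * T = g - \sum_(i in Lo) al i * pw (e i).
    by rewrite -hT -hsum hsplit addrC addKr.
  have h3 : `|g - \sum_(i in Lo) al i * pw (e i)| <= `|g| + A * pw h.-1.
    by apply: (le_trans (ler_normB _ _)); rewrite lerD2l.
  have h4 : `|g| + A * pw h.-1 < pw (h + G).
    have hh : h = (h.-1).+1 by rewrite /h.
    have hp : 1 <= pw h.-1 by have := pw_gt0 h.-1; lia.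
    apply: (@le_lt_trans _ _ ((`|g| + A) * pw h.-1)).
      rewrite mulrDl lerD2r -{1}[`|g|]mulr1 ler_wpM2l //.
    have e1 : pw (h + G) = pw G * pw h.-1 * pw 1.
      by rewrite -!pwD; congr pw; rewrite /h; lia.
    rewrite e1; apply: (@lt_le_trans _ _ (pw G * pw h.-1)).
      by rewrite ltr_pM2r ?pw_gt0.
    rewrite ler_peMr //; first by apply: ltW; apply: mulr_gt0; apply: pw_gt0.
    by rewrite /pw expr1 lez_nat ltnW.
  by move: h1; rewrite h2 => h1; have := le_trans h1 h3; rewrite leNgt h4.
split => //.
- move=> j hj; have hjU := subsetP hLoU j hj; rewrite hmin //=.
  move: hj; rewrite inE => /andP [_]; rewrite /h.
  have : (k0 * G <= #|U| * G)%N by rewrite leq_mul2r ltnW ?orbT.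
  move: (k0 * G)%N (#|U| * G)%N (e j) => X Y Z; rewrite /m0; lia.
- by move: hsplit; rewrite hT hT0 mulr0 addr0 hsum.
- by rewrite hT hT0 mulr0.
Qed.


Lemma homog (s : nat) : A < pw G -> forall (U : {set 'I_n}) (e : 'I_n -> nat),
  (#|U| <= s)%N -> \sum_(i in U) al i * pw (e i) = 0 ->
  exists rep : 'I_n -> 'I_n, exists off t : 'I_n -> nat,
   (forall i, i \in U -> [/\ rep i \in U, (off i <= n * G)%N & e i = (off i + t (rep i))%N]) /\
   (forall C, \sum_(i in U | rep i == C) al i * pw (off i) = 0).
Proof.
move=> hA; elim: s => [|s IH] U e hs hsum.
  case: (set_0Vmem U) => [->|[i1 hi1]].
    exists id, (fun _ => 0%N), (fun _ => 0%N); split => [i|C]; first by rewrite in_set0.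
    by rewrite big_pred0 // => i; rewrite in_set0.
  have : (0 < #|U|)%N by apply/card_gt0P; exists i1.
  by move=> h; exfalso; move: h hs; lia.
case: (set_0Vmem U) => [->|[i1 hi1]].
  exists id, (fun _ => 0%N), (fun _ => 0%N); split => [i|C]; first by rewrite in_set0.
  by rewrite big_pred0 // => i; rewrite in_set0.
have hb : `|0 : int| + A < pw G by rewrite normr0 add0r.
have [Lo [i0 [m0 [hi0 hLoU hrange hLo hHi]]]] := split_lemma hi1 hsum hb.
set Hi := U :\: Lo.
have hHis : (#|Hi| <= s)%N.
  have hsub : Hi \subset U :\ i0.
    apply/subsetP => j; rewrite !inE => /andP [hj ->]; rewrite andbT.
    by apply/negP => /eqP ej; move: hj; rewrite ej hi0.
  apply: (leq_trans (subset_leq_card hsub)).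
  move: hs; rewrite (cardsD1 i0 U) (subsetP hLoU _ hi0) add1n ltnS; exact.
have [rep' [off' [t' [h1 h2]]]] := IH Hi e hHis hHi.
exists (fun i => if i \in Lo then i0 else rep' i).
exists (fun i => if i \in Lo then (e i - m0)%N else off' i).
exists (fun C => if C \in Lo then m0 else t' C).
split.
  move=> i hi; case: ifP => hiLo.
    split; first exact: (subsetP hLoU).
      have := hrange i hiLo; have : (#|U| * G <= n * G)%N.
        by rewrite leq_mul2r (leq_trans (max_card _) (eq_leq (card_ord n))) orbT.
      by lia.
    by rewrite hi0 subnK //; case/andP: (hrange i hiLo).
  have hiH : i \in Hi by rewrite !inE hiLo hi.
  have [r1 r2 r3] := h1 i hiH.
  have : rep' i \notin Lo by move: r1; rewrite !inE => /andP [].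
  move/negbTE => ->; split => //; move: r1; rewrite !inE => /andP [].
  by [].
move=> C; rewrite (bigID (fun i => i \in Lo)) /=.
have -> : \sum_(i < n | (i \in U) && ((if i \in Lo then i0 else rep' i) == C) && ~~ (i \in Lo))
    al i * pw (if i \in Lo then (e i - m0)%N else off' i) =
    \sum_(i in Hi | rep' i == C) al i * pw (off' i).
  apply: eq_big => i; first by rewrite !inE; case: (i \in Lo) => /=; rewrite ?andbF ?andbT.
  by case/andP => _ /negbTE ->.
rewrite h2 addr0.
have -> : \sum_(i < n | (i \in U) && ((if i \in Lo then i0 else rep' i) == C) && (i \in Lo))
    al i * pw (if i \in Lo then (e i - m0)%N else off' i) =
    \sum_(i in Lo | i0 == C) al i * pw (e i - m0).
  apply: eq_big => i.
    case hi: (i \in Lo); rewrite ?andbF ?andbT //=.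
    by rewrite (subsetP hLoU _ hi).
  by case/andP => _ ->.
case: eqP => _; last by rewrite big_pred0 // => i; rewrite andbF.
rewrite (eq_bigl (fun i => i \in Lo)); last by move=> i; rewrite andbT.
have hz : pw m0 * \sum_(i in Lo) al i * pw (e i - m0) = 0.
  rewrite mulr_sumr -[RHS]hLo; apply: eq_bigr => i hi.
  by rewrite mulrCA -pwD subnKC //; case/andP: (hrange i hi).
by move/eqP: hz; rewrite mulf_eq0 (gt_eqF (pw_gt0 _)) /= => /eqP.
Qed.

Lemma cover_main (g : int) : `|g| + A < pw G ->
  forall e : 'I_n -> nat, \sum_i al i * pw (e i) = g ->
  exists fx f rep off,
    (forall i, f i <= `|g|%N + n * G /\ off i <= `|g|%N + n * G)%N /\
    (exists t, forall i, e i = kv 1 fx f rep off t i) /\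
    (forall t, \sum_i al i * pw (kv 1 fx f rep off t i) = g).
Proof.
move=> hg e hsum.
have hA : A < pw G by apply: le_lt_trans hg; rewrite lerDr normr_ge0.
case: (eqVneq g 0) => [g0|gn0].
  have hsum' : \sum_(i in [set: 'I_n]) al i * pw (e i) = 0.
    by rewrite -[RHS]g0 -[RHS]hsum; apply: eq_bigl => i; rewrite in_setT.
  have [rep [off [t [h1 h2]]]] := homog hA (leqnn _) hsum'.
  exists (fun _ => false), (fun _ => 0%N), rep, off; split.
    by move=> i; have [_ r2 _] := h1 i (in_setT i); split => //; apply: (leq_trans r2); apply: leq_addl.
  split.
    by exists t => i; have [_ _ ->] := h1 i (in_setT i); rewrite /kv mul1n.
  move=> t0; rewrite g0 pat_sum big_pred0 // add0r big1 // => C _.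
  rewrite -[X in X * _]/(\sum_(i | ~~ false && (rep i == C)) al i * (q%:Z) ^+ off i).
  have := h2 C; rewrite /pw => h2'.
  by rewrite (eq_bigl (fun i => (i \in [set: 'I_n]) && (rep i == C))) ?h2' ?mul0r // => i; rewrite in_setT.
case: (pickP (fun _ : 'I_n => true)) => [i1 _|hnone]; last first.
  by move: gn0; rewrite -hsum big_pred0 ?eqxx // => i; rewrite hnone.
have hsum' : \sum_(i in [set: 'I_n]) al i * pw (e i) = g.
  by rewrite -hsum; apply: eq_bigl => i; rewrite in_setT.
have [Lo [i0 [m0 [hi0 _ hrange hLo hHi]]]] := split_lemma (in_setT i1) hsum' hg.
have [rep [off [t [h1 h2]]]] := homog hA (leqnn _) hHi.
have hm0 : (m0 < `|g|%N)%N.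
  have hLo' : pw m0 * \sum_(i in Lo) al i * pw (e i - m0) = g.
    rewrite mulr_sumr -hLo; apply: eq_bigr => i hi.
    by rewrite mulrCA -pwD subnKC //; case/andP: (hrange i hi).
  set S := \sum_(i in Lo) _ in hLo'.
  have hS : S != 0 by apply/eqP => hS; move: gn0; rewrite -hLo' hS mulr0 eqxx.
  have := pw_gtk m0; have := pw_gt0 m0.
  have : `|g| = pw m0 * `|S| by rewrite -hLo' normrM gtr0_norm ?pw_gt0.
  move: hS; rewrite -abszE; move: (pw m0) => P; nia.
have hcard : (#|[set: 'I_n]| = n)%N by rewrite cardsT card_ord.
exists (fun i => i \in Lo), (fun i => if i \in Lo then e i else 0%N), rep,
       (fun i => if i \in Lo then 0%N else off i); split.
  move=> i; case: ifP => hi; split => //.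
  - by have := hrange i hi; rewrite hcard; lia.
  - have hiH : i \in [set: 'I_n] :\: Lo by rewrite !inE hi.
    by have [_ r2 _] := h1 i hiH; apply: (leq_trans r2); apply: leq_addl.
split.
  exists t => i; rewrite /kv; case: ifP => hi; first by rewrite hi.
  have hiH : i \in [set: 'I_n] :\: Lo by rewrite !inE hi.
  by have [_ _ ->] := h1 i hiH; rewrite hi mul1n.
move=> t0; rewrite pat_sum.
rewrite (eq_bigr (fun i => al i * pw (e i))); last by move=> i ->.
rewrite -[\sum_(i | i \in Lo) _]/(\sum_(i in Lo) al i * pw (e i)) hLo big1 ?addr0 // => C _.
have := h2 C => h2'.
rewrite (eq_big (fun i => (i \in [set: 'I_n] :\: Lo) && (rep i == C)) (fun i => al i * pw (off i))).
- by rewrite h2' mul0r.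
- by move=> i; rewrite !inE andbT.
- by move=> i /andP [/negbTE -> _].
Qed.

End Cover.

End M3.
Import M3.

Module M4.
Local Open Scope ring_scope.

Lemma int_transfer (q : nat) n (al : 'I_n -> int) (w : 'I_n -> rat) (ee : 'I_n -> nat) :
  (forall i, (al i)%:~R = w i) ->
  (\sum_i al i * (q%:Z) ^+ ee i)%:~R = \sum_i w i * (q%:R : rat) ^+ ee i.
Proof.
move=> h; rewrite rmorph_sum; apply: eq_bigr => i _.
by rewrite rmorphM rmorphXn /= h -pmulrn.
Qed.

Lemma split_sum (R : nmodType) n1 n2 (F : 'I_(n1 + n2) -> R) :
  \sum_i F i = \sum_(j < n1) F (lshift n2 j) + \sum_(j < n2) F (rshift n1 j).
Proof. exact: big_split_ord. Qed.

Lemma splitL n1 n2 (j : 'I_n1) : split (lshift n2 j) = inl j.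
Proof. by have := @unsplitK n1 n2 (inl j). Qed.
Lemma splitR n1 n2 (j : 'I_n2) : split (rshift n1 j) = inr j.
Proof. by have := @unsplitK n1 n2 (inr j). Qed.

Section Inter.
Variables (p E k : nat) (c0 c0' : rat) (n1 n2 : nat) (a : 'I_n1 -> rat) (a' : 'I_n2 -> rat).
Hypotheses (hp : (1 < p)%N) (hE : (0 < E)%N).
Let q := (p ^ E)%N.
Let Q : rat := q%:R.
Hypotheses (h0 : is_int ((Q - 1) * c0)) (ha : forall i, is_int ((Q - 1) * a i))
  (hs : is_int (c0 + \sum_(i < n1) a i))
  (h0' : is_int ((Q - 1) * c0')) (ha' : forall i, is_int ((Q - 1) * a' i))
  (hk : (#|[set i | a i != 0%R]| <= k)%N).

Let n := (n1 + n2)%N.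
Let w (i : 'I_n) : rat := match split i with inl j => a j | inr _ => 0 end.
Let w' (i : 'I_n) : rat := match split i with inl j => a j | inr j => - a' j end.

Lemma sum_w (F : 'I_n -> rat) : \sum_i w i * F i = \sum_j a j * F (lshift n2 j).
Proof.
rewrite split_sum [X in _ + X]big1 ?addr0.
  by apply: eq_bigr => j _; rewrite /w splitL.
by move=> j _; rewrite /w splitR mul0r.
Qed.

Lemma sum_w' (F : 'I_n -> rat) :
  \sum_i w' i * F i = \sum_j a j * F (lshift n2 j) - \sum_j a' j * F (rshift n1 j).
Proof.
rewrite split_sum; congr (_ + _).
  by apply: eq_bigr => j _; rewrite /w' splitL.
by rewrite -sumrN; apply: eq_bigr => j _; rewrite /w' splitR mulNr.
Qed.

Lemma hq : (1 < q)%N.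
Proof. by rewrite /q -(expn0 p) ltn_exp2l. Qed.

Lemma fam_w N : fam q c0 w N <-> fam q c0 a N.
Proof.
split.
  by case=> e he; exists (fun j => e (lshift n2 j)); rewrite he sum_w.
case=> e1 he; exists (fun i => match split i with inl j => e1 j | inr _ => 0%N end).
by rewrite he sum_w; congr (_ + _); apply: eq_bigr => j _; rewrite splitL.
Qed.

Lemma pn_inter : p_nested p k (fun N => fam q c0 a N /\ fam q c0' a' N).
Proof.
pose al : 'I_n -> int := fun i => numq ((Q - 1) * w' i).
pose g : int := numq ((Q - 1) * (c0' - c0)).
have hal : forall i, (al i)%:~R = (Q - 1) * w' i.
  move=> i; rewrite /al -is_int_numq // /w'; case: split => j //.
  by rewrite mulrN; apply: is_intN.
have hg : g%:~R = (Q - 1) * (c0' - c0).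
  by rewrite /g -is_int_numq // mulrBr; apply: is_intD => //; apply: is_intN.
pose G := (absz (`|g| + \sum_i `|al i|)).+1.
have hG0 : (0 < G)%N by [].
have hG : `|g| + \sum_i `|al i| < (q%:Z) ^+ G.
  apply: lt_trans (pw_gtk hq G); rewrite /G.
  have h0x : 0 <= `|g| + \sum_i `|al i|.
    by apply: addr_ge0 => //; apply: sumr_ge0 => i _.
  by rewrite -[X in X < _](gez0_abs h0x) ltz_nat.
have hQ1 : Q - 1 != 0.
  by rewrite subr_eq0 /Q pnatr_eq1 gtn_eqF // hq.
have hint : forall i, is_int ((Q - 1) * w i).
  by move=> i; rewrite /w; case: split => j //; rewrite mulr0; exact: is_int0.
have hsw : is_int (c0 + \sum_i w i).
  have := sum_w (fun _ => 1).
  under eq_bigr do rewrite mulr1.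
  under [X in _ = X]eq_bigr do rewrite mulr1.
  by move=> ->.
have hkw : (#|[set i | w i != 0%R]| <= k)%N.
  apply: leq_trans hk; apply: (leq_trans _ (leq_imset_card (lshift n2) _)).
  apply: subset_leq_card; apply/subsetP => i; rewrite inE /w.
  case: splitP => [j ej|j _]; last by rewrite eqxx.
  move=> hj; have -> : i = lshift n2 j by apply: val_inj; rewrite /= ej.
  by apply: imset_f; rewrite inE.
have key := @pn_cover p E k 1 (`|g|%N + n * G) c0 n w (fam q c0' a') hE isT h0 hint hsw hkw.
apply: (pn_ext _ (key _)).
  by move=> N; rewrite fam_w.
move=> N [e he] [e2 he2].
pose ee (i : 'I_n) : nat := match split i with inl _ => e i | inr j => e2 j end.
have heq : \sum_i al i * (q%:Z) ^+ ee i = g.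
  apply: (@intr_inj rat); rewrite (@int_transfer q n al (fun i => (Q - 1) * w' i)) // hg.
  under eq_bigr do rewrite -mulrA.
  rewrite -mulr_sumr sum_w'; congr (_ * _).
  rewrite /ee (eq_bigr (fun j => a j * Q ^+ e (lshift n2 j))); last by move=> j _; rewrite splitL.
  rewrite (eq_bigr (fun j => a' j * Q ^+ e2 j)); last by move=> j _; rewrite splitR.
  have := he; rewrite sum_w => he'.
  rewrite -/Q in he' he2.
  move: he' he2; set X := \sum_(i < n1) _; set Y := \sum_(i < n2) _ => he' he2.
  rewrite -[X](addKr c0) -he' -[Y](addKr c0') -he2; ring.
have [fx [f [rep [off [hb [[t ht] hall]]]]]] := cover_main hq hG0 hG heq.
exists fx, f, rep, off; split => //; split.
  exists t; rewrite he; congr (_ + _); apply: eq_bigr => i _; rewrite -ht /ee /w.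
  by case: (split i) => j; rewrite ?mul0r.
move=> N' [t' ht'].
have h1 := hall t'; move/(congr1 (fun z : int => (z%:~R : rat))): h1.
rewrite (@int_transfer q n al (fun i => (Q - 1) * w' i)) // hg; under eq_bigr do rewrite -mulrA.
rewrite -mulr_sumr => /(mulfI hQ1); rewrite sum_w' => h2.
exists (fun j => kv 1 fx f rep off t' (rshift n1 j)).
rewrite ht' sum_w; rewrite -/Q.
move: h2; set X := \sum_j a j * _; set Y := \sum_j a' j * _ => h2.
have -> : X = c0' - c0 + Y by rewrite -h2 subrK.
by ring.
Qed.

End Inter.

End M4.
Import M4.

Module M5.
Local Open Scope ring_scope.

Lemma period (q M : nat) : (0 < M)%N ->
  exists N0 m, (0 < m)%N /\ forall k t, (N0 <= k)%N -> (q ^ (k + m * t) %% M = q ^ k %% M)%N.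
Proof.
move=> hM.
pose f (i : 'I_M.+1) : 'I_M := Ordinal (ltn_pmod (q ^ i) hM).
have [[i [j [hij ne]]]|hno] := classic (exists i j, f i = f j /\ i != j); last first.
  have hinj : injective f.
    move=> x y hxy; case: (eqVneq x y) => // hne; exfalso; apply: hno; exists x, y; split => //.
  by move: (leq_card f hinj); rewrite !card_ord ltnn.
have hmod : forall x y : 'I_M.+1, f x = f y -> (q ^ x %% M = q ^ y %% M)%N.
  by move=> x y /(congr1 val).
wlog lt : i j hij ne / (i < j)%N.
  move=> hw; case: (ltngtP i j) => h; first exact: (hw i j).
  - by apply: (hw j i) => //; rewrite eq_sym.
  - by move: ne; rewrite (val_inj h) eqxx.
exists i, (j - i)%N; split; first by rewrite subn_gt0.
have step : forall k, (i <= k)%N -> (q ^ (k + (j - i)) %% M = q ^ k %% M)%N.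
  move=> k hk.
  have -> : (k + (j - i) = (k - i) + j)%N by lia.
  by rewrite expnD -modnMmr -(hmod _ _ hij) modnMmr -expnD subnK.
move=> k t hk; elim: t => [|t IH]; first by rewrite muln0 addn0.
have -> : (k + (j - i) * t.+1 = (k + (j - i) * t) + (j - i))%N by rewrite mulnS; lia.
rewrite step ?IH //; apply: leq_trans hk _; apply: leq_addr.
Qed.

Definition dv (M x : int) := exists z : int, x = M * z.

Lemma dvD M x y : dv M x -> dv M y -> dv M (x + y).
Proof. by case=> a -> [b ->]; exists (a + b); rewrite mulrDr. Qed.
Lemma dvMl M x y : dv M x -> dv M (y * x).
Proof. by case=> a ->; exists (y * a); rewrite mulrCA. Qed.
Lemma dv_sum M n (F : 'I_n -> int) : (forall i, dv M (F i)) -> dv M (\sum_i F i).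
Proof.
move=> h; apply: (big_ind (dv M)); first by exists 0; rewrite mulr0.
  exact: dvD.
by move=> i _; apply: h.
Qed.
Lemma dv_nat (M a b : nat) : (a %% M = b %% M)%N -> dv M%:Z (a%:Z - b%:Z).
Proof.
move=> h; exists ((a %/ M)%:Z - (b %/ M)%:Z).
rewrite {1}(divn_eq a M) {1}(divn_eq b M) h !PoszD !PoszM; ring.
Qed.

Lemma fam_int (q : nat) c0 n (a : 'I_n -> rat) (e : 'I_n -> nat) (N : nat) :
  is_int ((q%:R - 1) * c0) -> (forall i, is_int ((q%:R - 1) * a i)) ->
  (N%:R : rat) = c0 + \sum_i a i * q%:R ^+ e i ->
  (q%:Z - 1) * N%:Z = numq ((q%:R - 1) * c0) + \sum_i numq ((q%:R - 1) * a i) * (q%:Z) ^+ e i.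
Proof.
move=> h0 ha he; apply: (@intr_inj rat).
rewrite rmorphM rmorphB rmorph1 /= -!pmulrn rmorphD /= -is_int_numq //.
rewrite (@int_transfer q n _ (fun i => (q%:R - 1) * a i)); last first.
  by move=> i; rewrite -is_int_numq.
by rewrite he mulrDr mulr_sumr; congr (_ + _); apply: eq_bigr => i _; rewrite mulrA.
Qed.

Lemma pn_res p E k c0 n (a : 'I_n -> rat) (b r : nat) :
  (1 < p)%N -> (0 < E)%N ->
  is_int (((p ^ E)%:R - 1) * c0) ->
  (forall i, is_int (((p ^ E)%:R - 1) * a i)) ->
  is_int (c0 + \sum_(i < n) a i) ->
  (#|[set i | a i != 0%R]| <= k)%N -> (0 < b)%N ->
  p_nested p k (fun N => fam (p ^ E) c0 a N /\ (N %% b = r %% b)%N).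
Proof.
move=> hp hE h0 ha hs hk hb.
set q := (p ^ E)%N.
have hq : (1 < q)%N by rewrite /q -(expn0 p) ltn_exp2l.
have hM : (0 < (q - 1) * b)%N by rewrite muln_gt0 hb subn_gt0 hq.
have [N0 [m [hm hper]]] := period q hM.
apply: (@pn_cover p E k m (N0 + m) c0 n a _ hE hm h0 ha hs hk).
move=> N [e he] hN.
pose fx i := (e i < N0)%N.
pose off i := if (e i < N0)%N then 0%N else (N0 + (e i - N0) %% m)%N.
exists fx, (fun i => if (e i < N0)%N then e i else 0%N), id, off; split.
  move=> i; rewrite /off; case: ifP => hi; split => //.
  - by apply: leq_trans (ltnW hi) (leq_addr _ _).
  - by rewrite leq_add2l ltnW // ltn_pmod.
have hkv : forall t i, ~~ fx i -> kv m fx (fun i => if (e i < N0)%N then e i else 0%N) id off t i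
                         = (N0 + (e i - N0) %% m + m * t i)%N.
  by move=> t i /negbTE hi; rewrite /kv hi /off /fx -/(fx i) hi.
have hkv2 : forall t i, fx i -> kv m fx (fun i => if (e i < N0)%N then e i else 0%N) id off t i = e i.
  by move=> t i hi; rewrite /kv hi; rewrite /fx in hi; rewrite hi.
have hee : forall i, e i = kv m fx (fun i => if (e i < N0)%N then e i else 0%N) id off
                           (fun i => (e i - N0) %/ m)%N i.
  move=> i; case: (boolP (fx i)) => hi; first by rewrite hkv2.
  rewrite hkv //; move: hi; rewrite /fx -leqNgt => hi.
  by rewrite -addnA [(_ %% m + _)%N]addnC mulnC -divn_eq subnKC.
split.
  by exists (fun i => ((e i - N0) %/ m)%N); rewrite he; congr (_ + _); apply: eq_bigr => i _; rewrite -hee.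
move=> N' [t' ht'].
have i1 := fam_int h0 ha he.
have i2 := fam_int h0 ha ht'.
have hd : dv ((q - 1) * b)%N%:Z ((q%:Z - 1) * (N'%:Z - N%:Z)).
  rewrite mulrBr i1 i2.
  have -> : forall z0 S' S : int, (z0 + S') - (z0 + S) = S' - S by move=> *; ring.
  rewrite -sumrB; apply: dv_sum => i.
  rewrite -mulrBr; apply: dvMl; rewrite !pw_nat; apply: dv_nat.
  case: (boolP (fx i)) => hi; first by rewrite hkv2.
  rewrite hkv // {2}(hee i) hkv //.
  have hN0 : (N0 <= N0 + (e i - N0) %% m)%N by apply: leq_addr.
  by rewrite !hper.
case: hd => z hz.
have hq1 : (q%:Z - 1) != 0 by apply/eqP => h; move: h hq; lia.
have hz' : N'%:Z - N%:Z = b%:Z * z.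
  apply: (mulfI hq1); rewrite hz PoszM mulrA; congr (_ * _ * _).
  by move: hq; lia.
have : (N' %% b)%N%:Z = (N %% b)%N%:Z.
  rewrite -!modz_nat.
  have -> : N'%:Z = z * b%:Z + N%:Z by rewrite mulrC -hz' subrK.
  by rewrite modzMDl.
by case => ->.
Qed.

End M5.
Import M5.

Module M6.
Local Open Scope ring_scope.

Lemma elem_fam q c0 cs N :
  elem_set q c0 cs N <-> fam q c0 (fun i : 'I_(size cs) => cs`_i) N.
Proof.
split; first by case=> ks [_ h]; exists (fun i => nth 0%N ks i).
case=> e he; exists [seq e i | i <- enum 'I_(size cs)]; split.
  by rewrite size_map size_enum_ord.
rewrite he; congr (_ + _); apply: eq_bigr => i _.
by rewrite (nth_map i) ?size_enum_ord // nth_ord_enum.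
Qed.

Lemma fam_split q m c0 n (a : 'I_n -> rat) (hm : (0 < m)%N) N :
  fam q c0 a N <-> exists j : {ffun 'I_n -> 'I_m},
    pfam q m c0 a (fun _ => false) (fun _ => 0%N) id (fun i => nat_of_ord (j i)) N.
Proof.
split; last by case=> j /pfam_sub.
case=> e he; exists [ffun i => Ordinal (ltn_pmod (e i) hm)].
exists (fun i => (e i %/ m)%N); rewrite he; congr (_ + _); apply: eq_bigr => i _.
by rewrite /kv /= ffunE /= addnC mulnC -divn_eq.
Qed.

Lemma valid_card (cs : seq rat) k : (size cs <= k)%N ->
  (#|[set i : 'I_(size cs) | nth 0%R cs i != 0%R]| <= k)%N.
Proof. by move=> h; apply: leq_trans h; apply: leq_trans (max_card _) _; rewrite card_ord. Qed.

Lemma pn_elem2 p k E1 c01 cs1 E2 c02 cs2 :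
  (1 < p)%N -> (0 < E1)%N -> (0 < E2)%N ->
  elem_valid (p ^ E1) c01 cs1 -> (size cs1 <= k)%N -> elem_valid (p ^ E2) c02 cs2 ->
  p_nested p k (fun N => elem_set (p ^ E1) c01 cs1 N /\ elem_set (p ^ E2) c02 cs2 N).
Proof.
move=> hp hE1 hE2 [_ [v10 [v11 [v12 _]]]] hk [_ [v20 [v21 [v22 _]]]].
have hk1 := valid_card hk.
have hk2 := @valid_card cs2 _ (leqnn _).
set a1 := fun i : 'I_(size cs1) => cs1`_i.
set a2 := fun i : 'I_(size cs2) => cs2`_i.
pose J := ({ffun 'I_(size cs1) -> 'I_E2} * {ffun 'I_(size cs2) -> 'I_E1})%type.
pose P (j : J) := True.
pose X (j : J) := fun N =>
   fam (p ^ (E1 * E2)) (pc0 (p ^ E1) c01 a1 (fun _ => false) (fun _ => 0%N))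
       (pbeta (p ^ E1) a1 (fun _ => false) id (fun i => nat_of_ord (j.1 i))) N /\
   fam (p ^ (E1 * E2)) (pc0 (p ^ E2) c02 a2 (fun _ => false) (fun _ => 0%N))
       (pbeta (p ^ E2) a2 (fun _ => false) id (fun i => nat_of_ord (j.2 i))) N.
have hE : (0 < E1 * E2)%N by rewrite muln_gt0 hE1 hE2.
have hX : forall j, P j -> p_nested p k (X j).
  move=> j _.
  have [i1 i2 i3 i4] := @pfam_intg p E1 k E2 c01 _ a1 (fun _ => false) (fun _ => 0%N) id
     (fun i => nat_of_ord (j.1 i)) v10 v11 v12 hk1.
  have [i1' i2' i3' _] := @pfam_intg p E2 _ E1 c02 _ a2 (fun _ => false) (fun _ => 0%N) id
     (fun i => nat_of_ord (j.2 i)) v20 v21 v22 hk2.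
  rewrite mulnC in i1' i2'.
  exact: pn_inter hp hE i1 i2 i3 i1' i2' i4.
have h := pn_fin_union hX.
apply: pn_ext h => N; split.
  case=> j [_ [h1 h2]]; split; apply/elem_fam.
    by apply/(@fam_split _ _ _ _ _ hE2 _); exists j.1; apply/pfam_fam_eq; rewrite -expnM.
  by apply/(@fam_split _ _ _ _ _ hE1 _); exists j.2; apply/pfam_fam_eq; rewrite -expnM mulnC.
case=> /elem_fam/(@fam_split _ _ _ _ _ hE2 _) [j1 h1] /elem_fam/(@fam_split _ _ _ _ _ hE1 _) [j2 h2].
exists (j1, j2); split => //; split.
  by move/pfam_fam_eq: h1; rewrite -expnM.
by move/pfam_fam_eq: h2; rewrite -expnM mulnC.
Qed.

End M6.
Import M6.

Module M7.

Lemma in_max (F : seq nat) N : N \in F -> (N <= \max_(x <- F) x)%N.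
Proof. by move=> h; apply: leq_bigmax_seq. Qed.

Lemma pn_inter_nested p d (B1 B2 : nat -> Prop) :
  (1 < p)%N -> p_nested p d B1 -> p_nested p d B2 ->
  p_nested p d (fun N => B1 N /\ B2 N).
Proof.
move=> hp hn1 hn2; move: (hn1) (hn2) => [F1 [L1 [hL1 hB1]]] [F2 [L2 [hL2 hB2]]].
pose E (t : nat * rat * seq rat) N := elem_set (p ^ t.1.1) t.1.2 t.2 N.
have h1 : p_nested p d (fun N => N \in F1 /\ B2 N).
  by apply: (@pn_bounded _ _ _ (\max_(x <- F1) x)) => N [/in_max].
have h2 : p_nested p d (fun N => exists2 t, t \in L1 &
            ((E t N /\ N \in F2) \/ exists2 t', t' \in L2 & E t N /\ E t' N)).
  apply: pn_seq_union => t ht; apply: pn_union.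
    by apply: (@pn_bounded _ _ _ (\max_(x <- F2) x)) => N [_ /in_max].
  apply: pn_seq_union => t' ht'.
  have [a1 [a2 a3]] := hL1 t ht; have [b1 [b2 b3]] := hL2 t' ht'.
  exact: pn_elem2 hp a1 b1 a2 a3 b2.
apply: pn_ext (pn_union h1 h2) => N; rewrite hB1 hB2; split.
  case=> [[hF hB]|[t ht [[hE hF]|[t' ht' [hE hE']]]]].
  - by split => //; left.
  - by split; [right; exists t | left].
  - by split; [right; exists t | right; exists t'].
case=> [[hF|[t ht hE]] hB]; first by left.
right; exists t => //; case: hB => [hF|[t' ht' hE']]; first by left.
by right; exists t'.
Qed.

Definition resc (A : seq (nat * nat)) N := exists2 a, a \in A & (N %% a.2 = a.1 %% a.2)%N.

Lemma pn_inter_res p d (B : nat -> Prop) A :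
  (1 < p)%N -> p_nested p d B -> (forall a, a \in A -> 1 <= a.2)%N ->
  p_nested p d (fun N => B N /\ resc A N).
Proof.
move=> hp [F [L [hL hB]]] hA.
pose E (t : nat * rat * seq rat) N := elem_set (p ^ t.1.1) t.1.2 t.2 N.
have h1 : p_nested p d (fun N => N \in F /\ resc A N).
  by apply: (@pn_bounded _ _ _ (\max_(x <- F) x)) => N [/in_max].
have h2 : p_nested p d (fun N => exists2 t, t \in L & exists2 a, a \in A &
            (E t N /\ (N %% a.2 = a.1 %% a.2)%N)).
  apply: pn_seq_union => t ht; apply: pn_seq_union => a ha.
  have [a1 [[_ [v0 [v1 [v2 _]]]] a3]] := hL t ht.
  have := @pn_res p t.1.1 d t.1.2 _ (fun i : 'I_(size t.2) => nth 0%R t.2 i) a.2 a.1 hp a1 v0 v1 v2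
           (valid_card a3) (hA a ha).
  by apply: pn_ext => N; rewrite /E elem_fam.
apply: pn_ext (pn_union h1 h2) => N; rewrite hB; split.
  case=> [[hF hr]|[t ht [a ha [hE hr]]]]; first by split => //; left.
  by split; [right; exists t | exists a].
case=> [[hF|[t ht hE]] [a ha hr]]; first by left; split => //; exists a.
by right; exists t => //; exists a.
Qed.

Lemma res_combine (A1 A2 : seq (nat * nat)) :
  (forall a, a \in A1 -> 1 <= a.2)%N -> (forall a, a \in A2 -> 1 <= a.2)%N ->
  exists A : seq (nat * nat), (forall a, a \in A -> 1 <= a.2)%N /\
    forall N, (resc A1 N /\ resc A2 N) <-> exists2 a, a \in A & arith_prog a.1 a.2 N.
Proof.
move=> hA1 hA2.
pose cond (a b : nat * nat) r := ((r %% a.2 == a.1 %% a.2) && (r %% b.2 == b.1 %% b.2))%N.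
pose A := flatten [seq [seq (r, (a.2 * b.2)%N) | r <- iota 0 (a.2 * b.2) & cond a b r]
                  | a <- A1, b <- A2].
have memA : forall x, x \in A -> exists a b r, [/\ a \in A1, b \in A2, (r < a.2 * b.2)%N,
                cond a b r & x = (r, (a.2 * b.2)%N)].
  move=> x /flattenP [s /allpairsP [[a b] [ha hb ->]]] /mapP [r].
  by rewrite mem_filter mem_iota add0n => /andP [hc /andP [_ hr]] ->; exists a, b, r.
exists A; split.
  move=> x /memA [a [b [r [ha hb _ _ ->]]]] /=.
  by rewrite muln_gt0 (hA1 a ha) (hA2 b hb).
move=> N; split.
  case=> [[a ha hra] [b hb hrb]].
  have hM : (0 < a.2 * b.2)%N by rewrite muln_gt0 (hA1 a ha) (hA2 b hb).
  exists (N %% (a.2 * b.2), a.2 * b.2)%N.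
    apply/flattenP; exists [seq (r, (a.2 * b.2)%N) | r <- iota 0 (a.2 * b.2) & cond a b r].
      by apply/allpairsP; exists (a, b).
    apply/mapP; exists (N %% (a.2 * b.2))%N => //.
    rewrite mem_filter mem_iota add0n ltn_pmod // andbT /cond.
    have d1 : (a.2 %| a.2 * b.2)%N := dvdn_mulr _ (dvdnn _).
    have d2 : (b.2 %| a.2 * b.2)%N := dvdn_mull _ (dvdnn _).
    by rewrite (modn_dvdm N d1) (modn_dvdm N d2) hra hrb !eqxx.
  by rewrite /arith_prog /=; exists (N %/ (a.2 * b.2))%N; rewrite {1}(divn_eq N (a.2 * b.2)) addnC [(N %/ _ * _)%N]mulnC.
case=> x /memA [a [b [r [ha hb hr /andP [/eqP c1 /eqP c2] ->]]]] [j ->] /=.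
split.
  by exists a => //; rewrite addnC -mulnA mulnC modnMDl c1.
by exists b => //; rewrite addnC mulnAC modnMDl c2.
Qed.

Lemma ap_res (A : seq (nat * nat)) : (forall a, a \in A -> 1 <= a.2)%N ->
  ev_eq (fun N => exists2 a, a \in A & arith_prog a.1 a.2 N) (resc A).
Proof.
move=> hA; exists (\max_(a <- A) a.1) => N hN; split.
  by case=> a ha [j ->]; exists a => //; rewrite addnC mulnC modnMDl.
case=> a ha hr; exists a => //.
have ha1 : (a.1 <= N)%N by apply: leq_trans hN; apply: (@leq_bigmax_seq _ A xpredT (fun a : nat * nat => a.1) a ha).
have : (a.2 %| N - a.1)%N by rewrite -eqn_mod_dvd // hr.
case/dvdnP => j hj; exists j; rewrite mulnC -hj; lia.
Qed.


End M7.
Import M7.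

Theorem lemma9p5 (p d : nat) (S1 S2 : nat -> Prop) :
  prime p -> p_normal p d S1 -> p_normal p d S2 ->
  p_normal p d (fun n => S1 n /\ S2 n).
Proof.
move=> /prime_gt1 hp [B1 [A1 [hB1 [hA1 hs1]]]] [B2 [A2 [hB2 [hA2 hs2]]]].
have [A [hA hAeq]] := res_combine hA1 hA2.
exists (fun N => (B1 N /\ B2 N) \/ (B1 N /\ resc A2 N) \/ (B2 N /\ resc A1 N)), A.
split.
  apply: pn_union; first exact: pn_inter_nested.
  by apply: pn_union; apply: pn_inter_res.
split => //.
apply/fin_symdiff_ev.
move/fin_symdiff_ev: hs1 => [M1 h1]; move/fin_symdiff_ev: hs2 => [M2 h2].
have [M3 h3] := ap_res hA1; have [M4 h4] := ap_res hA2.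
exists (M1 + M2 + M3 + M4)%N => N hN.
have := h1 N ltac:(lia); have := h2 N ltac:(lia); have := h3 N ltac:(lia); have := h4 N ltac:(lia).
have := hAeq N.
tauto.
Qed.
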